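(* Let $\mathcal{S}\subset\mathbb{R}_{\ge0}$ be measurable with positive Lebesgue measure and let $\mathcal{G}$ be a convex class of probability distributions on $\mathbb{R}$ (i.e. $\lambda G_1+(1-\lambda)G_2\in\mathcal{G}$ for all $\lambda\in[0,1]$, $G_1,G_2\in\mathcal{G}$). Then $\mathrm{Tilt}[\mathcal{G}]=\{\mathrm{Tilt}[G]:G\in\mathcal{G}\}$ is also a convex class of probability distributions.
   Context: With $\varphi^{\mathrm{fold}}(z;\mu)=\varphi(z;\mu)+\varphi(-z;\mu)$, where $\varphi(z;\mu)$ is the $\mathrm{N}(\mu,1)$ density, and $\Phi(\mathcal{S};\mu)=\int_{\mathcal{S}}\varphi^{\mathrm{fold}}(z;\mu)dz$, the tilting of a prior $G$ is $\mathrm{Tilt}[G](d\mu)=\frac{\Phi(\mathcal{S};\mu)G(d\mu)}{\int\Phi(\mathcal{S};\mu')G(d\mu')}$. *)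

(* Defs.v *)
From HB Require Import structures.
From mathcomp Require Import all_boot all_order all_algebra.
From mathcomp Require Import all_classical all_reals all_analysis.
Set Implicit Arguments. Unset Strict Implicit. Unset Printing Implicit Defensive.
Import Order.TTheory GRing.Theory Num.Theory.
Import numFieldNormedType.Exports.
Local Open Scope classical_set_scope.
Local Open Scope ring_scope.

Section Tilt.
Variable R : realType.

Definition phi (z mu : R) : R :=
  expR (- ((z - mu) ^+ 2) / 2) / Num.sqrt (2 * pi).

Definition phi_fold (z mu : R) : R := phi z mu + phi (- z) mu.

Definition PhiS (S : set R) (mu : R) : \bar R :=
  (\int[lebesgue_measure]_(z in S) (phi_fold z mu)%:E)%E.

(* The normalizing constant is a finite positive real (0 < Phi <= 1 when
   S has positive measure and S is a subset of [0,oo)), hence `fine`. *)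
Definition Tilt (S : set R) (G : probability R R) (A : set R) : \bar R :=
  ((\int[G]_(m in A) PhiS S m) *
     ((fine (\int[G]_(m in setT) PhiS S m))^-1)%:E)%E.

Definition is_prob_distr (P : set R -> \bar R) : Prop :=
  exists p : probability R R, forall A, measurable A -> p A = P A.

Definition convex_class (C : set (set R -> \bar R)) : Prop :=
  forall P1 P2, C P1 -> C P2 -> forall l : R, 0 <= l <= 1 ->
    exists P, C P /\ forall A, measurable A ->
      P A = (l%:E * P1 A + (1 - l)%:E * P2 A)%E.

End Tilt.

(* Main.v *)
Require Import Defs.
From HB Require Import structures.
From mathcomp Require Import all_boot all_order all_algebra.
From mathcomp Require Import all_classical all_reals all_analysis.
From mathcomp Require Import measurable_realfun.
From mathcomp Require Import ring lra.
Set Implicit Arguments. Unset Strict Implicit. Unset Printing Implicit Defensive.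
Import Order.TTheory GRing.Theory Num.Theory.
Import numFieldNormedType.Exports.
Local Open Scope classical_set_scope.
Local Open Scope ring_scope.

Lemma mix_alg (R : realFieldType) (l c1 c2 i1 i2 : R) : c1 != 0 -> c2 != 0 ->
  l * c2 + (1 - l) * c1 != 0 ->
  (l * c2 / (l * c2 + (1 - l) * c1) * i1 + (1 - l * c2 / (l * c2 + (1 - l) * c1)) * i2)
   / (l * c2 / (l * c2 + (1 - l) * c1) * c1 + (1 - l * c2 / (l * c2 + (1 - l) * c1)) * c2) =
  l * (i1 / c1) + (1 - l) * (i2 / c2).
Proof.
move=> h1 h2 hD.
have E : l * c2 / (l * c2 + (1 - l) * c1) * c1 + (1 - l * c2 / (l * c2 + (1 - l) * c1)) * c2
  = c1 * c2 / (l * c2 + (1 - l) * c1) by field.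
rewrite E; field.
by rewrite h1 h2 hD.
Qed.

Section dens.
Local Open Scope ereal_scope.
Context d (T : measurableType d) (R : realType) (mu : {measure set T -> \bar R})
  (f : T -> \bar R).
Definition dens (_ : measurable_fun setT f) (_ : forall x, 0 <= f x)
  (_ : \int[mu]_x f x = 1) (A : set T) : \bar R := \int[mu]_(x in A) f x.
Variables (mf : measurable_fun setT f) (f0 : forall x, 0 <= f x)
  (f1 : \int[mu]_x f x = 1).

Let dens0 : dens mf f0 f1 set0 = 0.
Proof. by rewrite /dens integral_set0. Qed.

Let dens_ge0 A : 0 <= dens mf f0 f1 A.
Proof. by rewrite /dens integral_ge0. Qed.

Let dens_sigma_additive : semi_sigma_additive (dens mf f0 f1).
Proof.
move=> /= A mA tA mUA.
rewrite /dens/= ge0_integral_bigcup//=; last first.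
  exact: measurable_funTS.
apply: is_cvg_ereal_nneg_natsum_cond => n _ _.
exact: integral_ge0.
Qed.

HB.instance Definition _ := isMeasure.Build _ _ _
  (dens mf f0 f1) dens0 dens_ge0 dens_sigma_additive.

Let dens_setT : dens mf f0 f1 [set: _] = 1.
Proof. by rewrite /dens. Qed.

HB.instance Definition _ :=
  @Measure_isProbability.Build _ _ R (dens mf f0 f1) dens_setT.

Definition densP : probability T R := dens mf f0 f1.
End dens.

Section pos.
Local Open Scope ereal_scope.
Context d (T : measurableType d) (R : realType) (mu : {measure set T -> \bar R}).

Lemma integral_gt0 (D : set T) (g : T -> \bar R) : measurable D ->
  measurable_fun D g -> (forall x, D x -> 0 < g x) -> 0 < mu D ->
  0 < \int[mu]_(x in D) g x.
Proof.
move=> mD mg g0 muD.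
have ge0 : 0 <= \int[mu]_(x in D) g x.
  by apply: integral_ge0 => x Dx; exact: ltW (g0 x Dx).
rewrite lt_neqAle ge0 andbT; apply/eqP => I0.
pose E n := D `&` [set x | ((n.+1%:R)^-1)%:E <= `|g x|].
have mE n : measurable (E n).
  by apply: emeasurable_fun_c_infty => //; exact: measurableT_comp.
have E0 n : mu (E n) = 0.
  have H : ((n.+1%:R^-1)%:E) * mu (D `&` [set x | (`|g x| >= (n.+1%:R^-1)%:E)%E])
      <= \int[mu]_(x in D) `|g x|.
    apply: (@le_integral_comp_abse _ _ _ mu D mD g _ id) => //.
  move: H; rewrite /= (_ : \int[mu]_(x in D) `|g x| = 0); last first.
    rewrite I0; apply: eq_integral => x /[!inE] Dx.
    by rewrite gee0_abs// ltW// g0.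
  move=> H; apply/eqP; rewrite eq_le measure_ge0 andbT.
  by move: H; rewrite pmule_rle0 ?invr_gt0 ?ltr0n.
have DE : D = \bigcup_n E n.
  apply/seteqP; split => [x Dx|x [n _ []//]].
  have := g0 x Dx; case gx: (g x) => [r| |]// r0'.
    have r0 : (0 < r)%R by rewrite -lte_fin.
    have [n hn] : exists n : nat, ((n.+1%:R)^-1 <= r)%R.
      exists (Num.truncn r^-1).
      rewrite -[leRHS]invrK lef_pV2 ?posrE ?invr_gt0 ?ltr0n//.
      exact: ltW (truncnS_gt _).
    exists n => //; rewrite /E; split => //=.
    by rewrite gx /= lee_fin ger0_norm // ltW.
  by exists 0%N => //; rewrite /E; split => //=; rewrite gx leey.
have : mu.-negligible (\bigcup_n E n).
  apply: negligible_bigcup => n; exists (E n); split => //; exact: E0.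
rewrite -DE => -[N [mN muN DN]].
move: muD; rewrite lt_neqAle => /andP[/eqP + _]; apply.
apply/eqP; rewrite eq_le measure_ge0 /= -muN.
by apply: le_measure => //; rewrite inE.
Qed.
End pos.

Section gauss.
Context (R : realType).
Implicit Types z mu : R.

Lemma phiE z mu : phi z mu = normal_pdf mu 1 z.
Proof.
rewrite /normal_pdf oner_eq0 /phi /normal_peak /normal_fun expr1n mul1r.
by rewrite mulr_natl mulrC.
Qed.

Lemma phiN z mu : phi (- z) mu = phi z (- mu).
Proof. by rewrite /phi -opprD sqrrN opprK. Qed.

Lemma phi_gt0 z mu : 0 < phi z mu.
Proof.
by rewrite divr_gt0 ?expR_gt0 // sqrtr_gt0 mulr_gt0 ?pi_gt0.
Qed.

Lemma phi_fold_gt0 z mu : 0 < phi_fold z mu.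
Proof. by rewrite addr_gt0 ?phi_gt0. Qed.

Lemma measurable_phi mu : measurable_fun setT (fun z => phi z mu).
Proof.
rewrite (_ : (fun z => phi z mu) = normal_pdf mu 1); last first.
  by apply/funext => z; rewrite phiE.
exact: measurable_normal_pdf.
Qed.

Lemma measurable_phi2 : measurable_fun setT (fun p : R * R => phi p.2 p.1).
Proof.
rewrite /phi; apply: measurable_funM => //.
apply: measurableT_comp => //; apply: measurable_funM => //.
apply: measurableT_comp => //; apply: measurable_funX => //.
exact: measurable_funB.
Qed.

Lemma measurable_phiN2 : measurable_fun setT (fun p : R * R => phi (- p.2) p.1).
Proof.
rewrite /phi; apply: measurable_funM => //.
apply: measurableT_comp => //; apply: measurable_funM => //.
apply: measurableT_comp => //; apply: measurable_funX => //.
apply: measurable_funB => //.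
exact: measurableT_comp.
Qed.


Lemma measurable_phiN mu : measurable_fun setT (fun z => phi (- z) mu).
Proof.
rewrite (_ : (fun z => phi (- z) mu) = (fun z => phi z (- mu))).
  exact: measurable_phi.
by apply/funext => z; rewrite phiN.
Qed.

Lemma measurable_phi_fold mu : measurable_fun setT (fun z => phi_fold z mu).
Proof. exact: measurable_funD (measurable_phi mu) (measurable_phiN mu). Qed.

Local Open Scope ereal_scope.

Lemma int_phi mu : \int[lebesgue_measure]_z (phi z mu)%:E = 1.
Proof.
rewrite -(integral_normal_pdf mu 1); apply: eq_integral => z _.
by rewrite phiE.
Qed.

Variables (S : set R) (hSm : measurable S) (hSleb : 0 < lebesgue_measure S).

Lemma PhiS_fubini : PhiS S = fubini_F lebesgue_measure
  (fun p : R * R => ((\1_S p.2 : R) * phi_fold p.2 p.1)%R%:E).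
Proof.
apply/funext => mu; rewrite /PhiS /fubini_F [LHS]integral_mkcond.
apply: eq_integral => z _ /=; rewrite /patch indicE.
by case: (z \in S); rewrite ?mul1r ?mul0r.
Qed.

Lemma measurable_PhiS : measurable_fun setT (PhiS S).
Proof.
rewrite PhiS_fubini; apply: measurable_fun_fubini_tonelli_F.
  apply/measurable_EFinP; apply: measurable_funM.
    exact: measurableT_comp (measurable_indic hSm) measurable_snd.
  exact: measurable_funD measurable_phi2 measurable_phiN2.
move=> p; rewrite lee_fin mulr_ge0 //.
exact: ltW (phi_fold_gt0 _ _).
Qed.

Lemma PhiS_gt0 mu : 0 < PhiS S mu.
Proof.
apply: integral_gt0 => //.
  apply: measurable_funTS; apply/measurable_EFinP; exact: measurable_phi_fold.
by move=> z _; rewrite lte_fin phi_fold_gt0.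
Qed.

Lemma PhiS_ge0 mu : 0 <= PhiS S mu.
Proof. exact: ltW (PhiS_gt0 mu). Qed.

Lemma PhiS_le2 mu : PhiS S mu <= 2%:E.
Proof.
rewrite /PhiS /phi_fold.
under eq_integral do rewrite EFinD.
rewrite ge0_integralD //; last 4 first.
- by move=> z _; rewrite lee_fin ltW ?phi_gt0.
- apply: measurable_funTS; apply/measurable_EFinP; exact: measurable_phi.
- by move=> z _; rewrite lee_fin ltW ?phi_gt0.
- apply: measurable_funTS; apply/measurable_EFinP; exact: measurable_phiN.
rewrite (_ : 2%:E = 1 + 1) //; apply: leeD.
  rewrite -(int_phi mu); apply: ge0_subset_integral => //.
  - apply/measurable_EFinP; exact: measurable_phi.
  - by move=> z _; rewrite lee_fin ltW ?phi_gt0.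
rewrite -(int_phi (- mu)).
under eq_integral do rewrite phiN.
apply: ge0_subset_integral => //.
- apply/measurable_EFinP; exact: measurable_phi.
- by move=> z _; rewrite lee_fin ltW ?phi_gt0.
Qed.

Definition cP (G : probability R R) := \int[G]_(m in setT) PhiS S m.

Lemma cP_gt0 G : 0 < cP G.
Proof.
apply: integral_gt0 => //.
- exact: measurable_PhiS.
- by move=> m _; exact: PhiS_gt0.
- by move: (probability_setT G) => /= ->; rewrite lte01.
Qed.

Lemma intA_le (G : probability R R) A : measurable A ->
  \int[G]_(m in A) PhiS S m <= cP G.
Proof.
move=> mA; apply: ge0_subset_integral => //.
- exact: measurable_PhiS.
- by move=> m _; exact: PhiS_ge0.
Qed.

Lemma cP_le2 G : cP G <= 2%:E.
Proof.
apply: (@le_trans _ _ (\int[G]_(m in setT) (cst 2%:E) m)).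
  apply: ge0_le_integral => //.
  - by move=> m _; exact: PhiS_ge0.
  - exact: measurable_PhiS.
  - by move=> m _; exact: PhiS_le2.
by rewrite integral_cst //; move: (probability_setT G) => /= ->; rewrite mule1.
Qed.

Lemma intA_fin (G : probability R R) A : measurable A ->
  \int[G]_(m in A) PhiS S m \is a fin_num.
Proof.
move=> mA; rewrite ge0_fin_numE; last first.
  by apply: integral_ge0 => m _; exact: PhiS_ge0.
apply: (le_lt_trans (intA_le G mA)).
exact: (le_lt_trans (cP_le2 G)) (ltry _).
Qed.

Lemma cP_fine_gt0 G : (0 < fine (cP G))%R.
Proof. by rewrite -lte_fin fineK ?cP_gt0 // intA_fin. Qed.


Lemma Tilt_prob G : is_prob_distr (Tilt S G).
Proof.
pose k := ((fine (cP G))^-1)%R.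
have k0 : (0 <= k)%R by rewrite invr_ge0 ltW // cP_fine_gt0.
pose f := fun m => k%:E * PhiS S m.
have mf : measurable_fun setT f by apply: measurable_funeM; exact: measurable_PhiS.
have f0 : forall x, 0 <= f x by move=> x; rewrite mule_ge0 // PhiS_ge0.
have f1 : \int[G]_x f x = 1.
  rewrite ge0_integralZl //; last by move=> m _; exact: PhiS_ge0.
    rewrite (_ : \int[G]_x PhiS S x = (fine (cP G))%:E); last first.
      by rewrite fineK //; exact: intA_fin.
    by rewrite -EFinM /k mulVf // gt_eqF // cP_fine_gt0.
  exact: measurable_PhiS.
exists (@densP _ _ _ G f mf f0 f1) => A mA.
rewrite /densP /dens /Tilt /f.
change (\int[G]_(x in A) (k%:E * PhiS S x) = \int[G]_(m in A) PhiS S m * k%:E); rewrite ge0_integralZl //.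
- by rewrite muleC.
- exact: measurable_funTS measurable_PhiS.
- by move=> m _; exact: PhiS_ge0.
Qed.

Lemma mix_int (G G1 G2 : probability R R) (lam : R) (l0 : (0 <= lam)%R)
  (l1 : (lam <= 1)%R)
  (hG : forall A, measurable A -> G A = lam%:E * G1 A + (1 - lam)%:E * G2 A)
  (A : set R) (mA : measurable A) (h : R -> \bar R)
  (mh : measurable_fun setT h) (h0 : forall x, 0 <= h x) :
  \int[G]_(x in A) h x =
  lam%:E * \int[G1]_(x in A) h x + (1 - lam)%:E * \int[G2]_(x in A) h x.
Proof.
have l0' : (0 <= 1 - lam)%R by rewrite subr_ge0.
rewrite (eq_measure_integral
  (measure_add (mscale (NngNum l0) G1) (mscale (NngNum l0') G2))); last first.
  move=> B mB _.
  transitivity (lam%:E * G1 B + (1-lam)%:E * G2 B); first exact: hG.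
  by rewrite /measure_add /= /msum 2!big_ord_recl /= big_ord0 adde0.
have mhA : measurable_fun A h by exact: measurable_funTS.
have h0' : forall x, A x -> 0 <= h x by move=> x _; exact: h0.
rewrite ge0_integral_measure_add //.
by rewrite !ge0_integral_mscale.
Qed.

End gauss.

Unset Implicit Arguments.
Theorem proposition2 (R : realType) (S : set R) (Gs : set (probability R R))
  (hSm : measurable S) (hSpos : S `<=` [set x | 0 <= x])
  (hSleb : (0 < lebesgue_measure S)%E)
  (hconv : convex_class [set (fun A => (G : probability R R) A) | G in Gs]) :
  (forall G, Gs G -> is_prob_distr (Tilt S G)) /\
  convex_class [set Tilt S G | G in Gs].
Proof.
split; first by move=> G _; exact: Tilt_prob.
move=> P1 P2 [G1 hG1 <-] [G2 hG2 <-] l /andP[l0 l1].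
pose c1 := fine (cP S G1); pose c2 := fine (cP S G2).
have c1p : 0 < c1 by exact: cP_fine_gt0.
have c2p : 0 < c2 by exact: cP_fine_gt0.
have l1' : 0 <= 1 - l by rewrite subr_ge0.
pose D := l * c2 + (1 - l) * c1.
have Dp : 0 < D.
  rewrite /D; move: (l0); rewrite le0r => /orP[/eqP ->|lp].
    by rewrite mul0r add0r subr0 mul1r.
  have := mulr_gt0 lp c2p; have := mulr_ge0 l1' (ltW c1p).
  rewrite /D; lra.
pose lam := l * c2 / D.
have lam0 : 0 <= lam by rewrite divr_ge0 ?mulr_ge0 ?(ltW c2p) ?(ltW Dp).
have lam1 : lam <= 1.
  rewrite ler_pdivrMr // mul1r /D.
  have := mulr_ge0 l1' (ltW c1p); lra.
have [P [[G hG hGP] hP]] := hconv (fun A => G1 A) (fun A => G2 A)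
  (ex_intro2 _ _ G1 hG1 erefl) (ex_intro2 _ _ G2 hG2 erefl) lam
  (introT andP (conj lam0 lam1)).
have hGm : forall A, measurable A ->
    G A = (lam%:E * G1 A + (1 - lam)%:E * G2 A)%E.
  by move=> A mA; rewrite -hP // -hGP.
exists (Tilt S G); split; first by exists G.
move=> A mA; rewrite /Tilt.
rewrite !(mix_int lam0 lam1 hGm) //; [|exact: measurable_PhiS|
  by move=> m; exact: PhiS_ge0|exact: measurable_PhiS|by move=> m; exact: PhiS_ge0].
rewrite -[(\int[G1]_(m in A) PhiS S m)%E]fineK; last exact: intA_fin.
rewrite -[(\int[G2]_(m in A) PhiS S m)%E]fineK; last exact: intA_fin.
rewrite -[(\int[G1]_(m in setT) PhiS S m)%E]fineK; last exact: intA_fin.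
rewrite -[(\int[G2]_(m in setT) PhiS S m)%E]fineK; last exact: intA_fin.
rewrite -/(cP S G1) -/(cP S G2) -/c1 -/c2.
rewrite -!EFinM -!EFinD /= -?EFinM -?EFinD; congr EFin.
rewrite /lam /D; apply: mix_alg.
- exact: lt0r_neq0 c1p.
- exact: lt0r_neq0 c2p.
- exact: lt0r_neq0 Dp.
Qed.
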